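(* For the public-key scheme $\mathsf{FrodoPKE}$ with secret key $\mathbf S\in\mathbb Z_q^{n\times\bar n}$, there exists a quantum algorithm that makes one quantum query to $\mathsf{FrodoPKE}.\mathsf{Dec}_{\mathbf S}$ and recovers any choice of $\bar m$ of the $\bar n$ columns of $\mathbf S$. For each of the chosen columns, if that column has at least one odd entry, then the algorithm succeeds in recovering that column with probability at least $4/\pi^2$.
   Context: $\mathsf{FrodoPKE}$ with integer parameters $n,\bar m,\bar n$, modulus $q\ge2$ a power of $2$, number $B$ of encoded bits per entry, and discrete symmetric error distribution $\chi$: $\mathsf{KeyGen}$ samples uniform $\mathbf A\in\mathbb Z_q^{n\times n}$ and $\mathbf S,\mathbf E\leftarrow\chi$ in $\mathbb Z_q^{n\times\bar n}$, sets $\mathbf B=\mathbf A\mathbf S+\mathbf E$, public key $(\mathbf A,\mathbf B)$, secret key $\mathbf S$. Encryption of $\mathbf m\in\{0,1\}^{B\bar m\bar n}$, encoded as $\mathbf M\in\mathbb Z_q^{\bar m\times\bar n}$ whose entries are zero outside their $B$ most significant bits, samples $\mathbf S',\mathbf E'\leftarrow\chi$ in $\mathbb Z_q^{\bar m\times n}$, $\mathbf E''\leftarrow\chi$ in $\mathbb Z_q^{\bar m\times\bar n}$ and outputs $(\mathbf C_1,\mathbf C_2)=(\mathbf S'\mathbf A+\mathbf E',\mathbf M+\mathbf S'\mathbf B+\mathbf E'')$. $\mathsf{Dec}_{\mathbf S}(\mathbf C_1,\mathbf C_2)$ for $(\mathbf C_1,\mathbf C_2)\in\mathbb Z_q^{\bar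 m\times n}\times\mathbb Z_q^{\bar m\times\bar n}$ computes $\mathbf M=\mathbf C_2-\mathbf C_1\mathbf S$ and outputs, for each $(i,j)\in[\bar m]\times[\bar n]$, the integer in $\mathbb Z_{2^B}$ given by the $B$ most significant bits of $M_{i,j}$. A quantum query to $\mathsf{Dec}_{\mathbf S}$ means one application, on arbitrary superpositions of ciphertexts, of the unitary that maps $|\mathbf C_1,\mathbf C_2\rangle\bigotimes_{i,j}|z_{i,j}\rangle$ ($z_{i,j}\in\mathbb Z_{2^B}$) to $|\mathbf C_1,\mathbf C_2\rangle\bigotimes_{i,j}|z_{i,j}+\mathsf{Dec}_{\mathbf S}(\mathbf C_1,\mathbf C_2)_{i,j}\bmod 2^B\rangle$. *)

(* Defs.v *)
From HB Require Import structures.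
From mathcomp Require Import all_boot all_order all_algebra.
From mathcomp Require Import reals trigo.
From mathcomp Require Import complex.
Set Implicit Arguments. Unset Strict Implicit. Unset Printing Implicit Defensive.
Import Order.TTheory GRing.Theory Num.Theory.
Local Open Scope ring_scope.

Definition msb (k B : nat) (x : 'Z_(2^k)) : 'Z_(2^B) :=
  inZp (val x %/ 2 ^ (k - B))%N.

Definition frodo_dec (k B mbar n nbar : nat) (S : 'M['Z_(2^k)]_(n, nbar))
  (C1 : 'M['Z_(2^k)]_(mbar, n)) (C2 : 'M['Z_(2^k)]_(mbar, nbar))
  : 'M['Z_(2^B)]_(mbar, nbar) :=
  map_mx (@msb k B) (C2 - C1 *m S).

(* Computational basis of the algorithm's register: ciphertext register (C1, C2),
   answer register (z_{i,j}) and an arbitrary finite workspace W. *)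
Definition basis (k B mbar n nbar : nat) (W : finType) : finType :=
  ('M['Z_(2^k)]_(mbar, n) * 'M['Z_(2^k)]_(mbar, nbar)
    * 'M['Z_(2^B)]_(mbar, nbar) * W)%type.

Definition qstate (R : realType) (T : finType) := T -> R[i].

Definition sqnorm (R : realType) (x : R[i]) : R := complex.Re x ^+ 2 + complex.Im x ^+ 2.

Definition unit_vector (R : realType) (T : finType) (psi : qstate R T) : Prop :=
  \sum_(x : T) sqnorm (psi x) = 1.

(* A linear operator given by its matrix U x y = <x|U|y>. *)
Definition apply_op (R : realType) (T : finType) (U : T -> T -> R[i])
  (psi : qstate R T) : qstate R T :=
  fun x => \sum_(y : T) U x y * psi y.

(* U is unitary (on a finite-dimensional space, U^* U = I suffices). *)
Definition unitary (R : realType) (T : finType) (U : T -> T -> R[i]) : Prop :=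
  forall y y' : T, \sum_(x : T) (conjc (U x y)) * U x y' = (y == y')%:R.

(* One quantum query to Dec_S (tensored with identity on the workspace):
   |C1,C2>|z>|w>  |->  |C1,C2>|z + Dec_S(C1,C2)>|w>  (entrywise mod 2^B). *)
Definition dec_oracle (R : realType) (k B mbar n nbar : nat) (W : finType)
  (S : 'M['Z_(2^k)]_(n, nbar)) (psi : qstate R (basis k B mbar n nbar W))
  : qstate R (basis k B mbar n nbar W) :=
  fun x => let: (C1, C2, z, w) := x in
           psi (C1, C2, z - @frodo_dec k B mbar n nbar S C1 C2, w).

Definition meas_prob (R : realType) (T : finType) (phi : qstate R T) (P : pred T) : R :=
  \sum_(x : T | P x) sqnorm (phi x).

(* Main.v *)
From Pilot Require Import Defs.
From HB Require Import structures.
From mathcomp Require Import all_boot all_order all_algebra.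
From mathcomp Require Import reals trigo.
From mathcomp Require Import complex.
From mathcomp Require Import all_classical all_reals all_analysis.
From mathcomp Require Import ring lra.
Import Pilot.Defs.
Import Order.TTheory GRing.Theory Num.Theory numFieldNormedType.Exports.
Local Open Scope ring_scope.

Module Helpers.
Set Implicit Arguments. Unset Strict Implicit. Unset Printing Implicit Defensive.
Section AllHelpers.
Local Open Scope complex_scope.

Lemma sin_lex (R : realType) (x : R) : 0 <= x -> sin x <= x.
Proof.
move=> x0.
have [c _ H] : exists2 c, c \in `[0, x]%R & sin x - sin 0 = cos c * (x - 0).
  apply: MVT_segment => //.
  exact/continuous_subspaceT/continuous_sin.
move: H; rewrite sin0 !subr0 => ->.
by rewrite ler_piMl // cos_le1.
Qed.

Section Ex.
Variable R : realType.
Definition ex (t : R) : R[i] := (cos t +i* sin t).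

Lemma exD s t : ex (s + t) = ex s * ex t.
Proof.
rewrite /ex cosD sinD; simpc. congr (_ +i* _); ring.
Qed.

Lemma ex0 : ex 0 = 1.
Proof. by rewrite /ex cos0 sin0. Qed.

Lemma ex2pi m : ex (pi *+ 2 *+ m) = 1.
Proof.
elim: m => [|m IH]; first by rewrite mulr0n ex0.
by rewrite mulrSr exD IH mul1r /ex cos2pi sin2pi.
Qed.

Lemma exJ t : (ex t)^* * ex t = 1.
Proof.
rewrite /ex; simpc.
apply/eqP; rewrite eq_complex /=; apply/andP; split; apply/eqP.
  by rewrite -!expr2 cos2Dsin2.
ring.
Qed.

Lemma sqnorm_ex t : sqnorm (ex t) = 1.
Proof. by rewrite /sqnorm /= cos2Dsin2. Qed.

End Ex.

Section Chin.
Variable R : realType.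
Definition chin (p a : nat) : R[i] := ex (pi *+ 2 * a%:R / p%:R).

Lemma chinD p a b : chin p (a + b) = chin p a * chin p b.
Proof. by rewrite /chin -exD natrD mulrDr mulrDl. Qed.

Lemma chin0 p : chin p 0 = 1.
Proof. by rewrite /chin mulr0 mul0r ex0. Qed.

Lemma chin_mul p d : (0 < p)%N -> chin p (d * p) = 1.
Proof.
move=> p0; rewrite /chin natrM mulrA mulfK ?pnatr_eq0 -?lt0n //.
by rewrite mulr_natr ex2pi.
Qed.

Lemma chin_mod p a : (0 < p)%N -> chin p a = chin p (a %% p).
Proof.
move=> p0; by rewrite {1}(divn_eq a p) chinD chin_mul // mul1r.
Qed.

Lemma chinJ p a : (chin p a)^* * chin p a = 1.
Proof. exact: exJ. Qed.

Lemma chin_neq0 p a : chin p a != 0.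
Proof.
apply/eqP => h; have := chinJ p a; rewrite h mulr0 => /eqP.
by rewrite eq_sym oner_eq0.
Qed.

Lemma chin_scale L Q t : (0 < L)%N -> chin (L * Q) (L * t) = chin Q t.
Proof.
move=> L0; rewrite /chin !natrM; congr ex.
have L0' : (L%:R : R) != 0 by rewrite pnatr_eq0 -lt0n.
have [->|Q0] := eqVneq (Q%:R : R) 0; first by rewrite !mulr0 !invr0 !mulr0.
by field; apply/andP; split.
Qed.

Lemma chin_neq1 p a : (0 < a < p)%N -> chin p a != 1.
Proof.
move=> /andP[a0 ap]; apply/eqP => /(congr1 (@complex.Re R)) /=.
set th := (pi *+ 2 * a%:R / p%:R).
have hp : (0 : R) < p%:R by rewrite ltr0n (ltn_trans a0 ap).
have pi0 : (0:R) < pi := pi_gt0 R.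
have a0' : (0:R) < a%:R by rewrite ltr0n.
have ap' : (a%:R:R) < p%:R by rewrite ltr_nat.
have thE : th / 2 = pi * (a%:R / p%:R) by rewrite /th; field; rewrite pnatr_eq0 -lt0n (ltn_trans a0 ap).
have h1 : 0 < sin (th / 2).
  apply: sin_gt0_pi; rewrite thE; apply/andP; split.
    by apply: mulr_gt0 => //; apply: divr_gt0.
  by rewrite -{2}(mulr1 pi) ltr_pM2l // ltr_pdivrMr // mul1r.
have -> : th = (th / 2) *+ 2 by rewrite -mulr_natr mulfVK.
rewrite cos_mulr2n cos2sin2 => h2.
have : sin (th / 2) ^+ 2 = 0 by lra.
by move/eqP; rewrite expf_eq0 /= => /eqP h; rewrite h ltxx in h1.
Qed.

End Chin.

Section Norm.
Variable R : realType.

Lemma sqnormE (x : R[i]) : (sqnorm x)%:C = x * x^*.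
Proof. by rewrite /sqnorm add_Re2_Im2 sqr_normc. Qed.

Lemma sum_delta (T : finType) (x : T) (f : T -> R[i]) :
  \sum_y (x == y)%:R * f y = f x.
Proof.
rewrite (bigD1 x) //= eqxx mul1r big1 ?addr0 // => y /negbTE.
by rewrite eq_sym => ->; rewrite mul0r.
Qed.

Lemma unitary_norm (T : finType) (U : T -> T -> R[i]) (v : qstate R T) :
  unitary U -> \sum_x sqnorm (apply_op U v x) = \sum_x sqnorm (v x).
Proof.
move=> hU; apply: complexI; rewrite !rmorph_sum /=.
under eq_bigr => x _ do rewrite sqnormE /apply_op rmorph_sum mulr_suml.
under eq_bigr => x _ do under eq_bigr => y _ do rewrite mulr_sumr.
rewrite exchange_big /=.
under eq_bigr => y _ do rewrite exchange_big /=.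
apply: eq_bigr => y _; rewrite sqnormE.
transitivity (\sum_y' v y * (v y')^* * \sum_x ((U x y')^* * U x y)).
  apply: eq_bigr => y' _; rewrite mulr_sumr; apply: eq_bigr => x _.
  by rewrite rmorphM /=; ring.
under eq_bigr => y' _ do rewrite hU.
rewrite (bigD1 y) //= eqxx mulr1 big1 ?addr0 // => y' /negbTE.
by rewrite eq_sym => ->; rewrite mulr0.
Qed.

End Norm.

Section ChiZ.
Variable R : realType.
Variable p : nat.
Hypothesis hp : (1 < p)%N.

Definition chiZ (x : 'Z_p) : R[i] := chin R p (val x).

Lemma valZpD (x y : 'Z_p) : val (x + y) = ((val x + val y) %% p)%N.
Proof. by rewrite /=; congr (_ %% _)%N; exact: Zp_cast. Qed.

Lemma valZp_lt (x : 'Z_p) : (val x < p)%N.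
Proof. have := ltn_ord x; by rewrite [X in (_ < X)%N -> _]Zp_cast. Qed.

Lemma chiZD x y : chiZ (x + y) = chiZ x * chiZ y.
Proof. by rewrite /chiZ valZpD -chin_mod ?chinD // ltnW. Qed.

Lemma chiZ0 : chiZ 0 = 1.
Proof. exact: chin0. Qed.

Lemma chiZN x : chiZ (- x) = (chiZ x)^*.
Proof.
apply: (mulIf (chin_neq0 R p (val x))).
by rewrite -/(chiZ x) -chiZD addNr chiZ0 chinJ.
Qed.

Lemma chiZB x y : chiZ (x - y) = chiZ x * (chiZ y)^*.
Proof. by rewrite chiZD chiZN. Qed.

Lemma chiZ_neq1 x : x != 0 -> chiZ x != 1.
Proof.
move=> x0; apply: chin_neq1; rewrite valZp_lt andbT lt0n.
by apply: contra x0 => /eqP h; apply/eqP/val_inj.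
Qed.

Lemma chiZ_sum (I : finType) (F : I -> 'Z_p) : chiZ (\sum_i F i) = \prod_i chiZ (F i).
Proof.
elim/big_rec2: _ => [|i b c _ <-]; first exact: chiZ0.
by rewrite chiZD.
Qed.

Definition dotm m n (D E : 'M['Z_p]_(m, n)) : 'Z_p := \sum_a \sum_i D a i * E a i.

Lemma dotmDl m n (D D' E : 'M['Z_p]_(m, n)) : dotm (D + D') E = dotm D E + dotm D' E.
Proof.
rewrite /dotm -big_split /=; apply: eq_bigr => a _.
rewrite -big_split /=; apply: eq_bigr => i _; by rewrite mxE mulrDl.
Qed.

Lemma dotmBr m n (D E E' : 'M['Z_p]_(m, n)) : dotm D (E - E') = dotm D E - dotm D E'.
Proof.
rewrite /dotm -sumrB /=; apply: eq_bigr => a _.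
rewrite -sumrB /=; apply: eq_bigr => i _; by rewrite !mxE mulrBr.
Qed.

Lemma dotm0 m n (D : 'M['Z_p]_(m, n)) : dotm D 0 = 0.
Proof. by rewrite /dotm big1 // => a _; rewrite big1 // => i _; rewrite mxE mulr0. Qed.

Lemma dotm_delta m n (a0 : 'I_m) (i0 : 'I_n) (E : 'M['Z_p]_(m, n)) :
  dotm (delta_mx a0 i0) E = E a0 i0.
Proof.
rewrite /dotm (bigD1 a0) //= (bigD1 i0) //= mxE !eqxx mul1r.
rewrite big1 ?addr0; last by move=> i /negbTE hi; rewrite mxE eqxx hi mul0r.
rewrite big1 ?addr0 // => a /negbTE ha; rewrite big1 // => i _.
by rewrite mxE ha mul0r.
Qed.

Lemma chi_ortho m n (E : 'M['Z_p]_(m, n)) :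
  \sum_(D : 'M['Z_p]_(m, n)) chiZ (dotm D E) = if E == 0 then #|{: 'M['Z_p]_(m, n)}|%:R else 0.
Proof.
have [->|E0] := eqVneq E 0.
  under eq_bigr => D _ do rewrite dotm0 chiZ0.
  by rewrite sumr_const.
have [[a0 i0] /= h | h] := pickP (fun ai : 'I_m * 'I_n => E ai.1 ai.2 != 0); last first.
  by case/eqP: E0; apply/matrixP => a i; move/negbFE: (h (a, i)) => /eqP ->; rewrite mxE.
set S := \sum_D _.
have hS : S = chiZ (E a0 i0) * S.
  rewrite {1}/S (reindex_inj (addIr (delta_mx a0 i0 : 'M['Z_p]_(m, n)))) /= /S mulr_sumr.
  by apply: eq_bigr => D _; rewrite dotmDl dotm_delta chiZD mulrC.
have : (1 - chiZ (E a0 i0)) * S = 0 by rewrite mulrBl mul1r -hS subrr.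
move/eqP; rewrite mulf_eq0 subr_eq0 eq_sym (negbTE (chiZ_neq1 h)) /=.
by move/eqP.
Qed.

End ChiZ.

Section Rows.
Variable K : comNzRingType.

Lemma sum_rows (T : finType) (m n : nat) (P : 'I_m -> pred 'rV[T]_n)
  (F : 'I_m -> 'rV[T]_n -> K) :
  \sum_(C : 'M[T]_(m, n) | [forall a, P a (row a C)]) \prod_a F a (row a C)
  = \prod_a \sum_(c | P a c) F a c.
Proof.
rewrite bigA_distr_big_dep /=.
pose h (f : {ffun 'I_m -> 'rV[T]_n}) : 'M[T]_(m, n) := \matrix_(a < m) f a.
pose g (C : 'M[T]_(m, n)) : {ffun 'I_m -> 'rV[T]_n} := [ffun a => row a C].
have hg : cancel g h.
  by move=> C; apply/matrixP => a j; rewrite /h /g !mxE ffunE mxE.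
have gh : cancel h g.
  by move=> f; apply/ffunP => a; rewrite /g /h ffunE rowK.
rewrite (reindex h) /=; last by exists g => x _; [apply: gh | apply: hg].
apply: eq_big => f.
  by apply/forallP/familyP => H a; move: (H a); rewrite rowK.
by move=> _; apply: eq_bigr => a _; rewrite rowK.
Qed.

Lemma sum_rows_all (T : finType) (m n : nat) (F : 'I_m -> 'rV[T]_n -> K) :
  \sum_(C : 'M[T]_(m, n)) \prod_a F a (row a C) = \prod_a \sum_c F a c.
Proof.
rewrite -(sum_rows (fun _ _ => true)); apply: eq_bigl => C.
by apply/esym/forallP.
Qed.

End Rows.

Section Ana.
Variable R : realType.

Lemma chinX p b : chin R p b = (chin R p 1) ^+ b.
Proof.
elim: b => [|b IH]; first by rewrite chin0 expr0.
by rewrite -addn1 chinD IH exprD expr1.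
Qed.

Lemma sqnorm_ex_sub1 (t : R) : sqnorm (ex t - 1) = 4 * sin (t / 2) ^+ 2.
Proof.
set h := t / 2.
have -> : t = h *+ 2 by rewrite /h -mulr_natr divfK ?pnatr_eq0.
rewrite /sqnorm /ex /=.
rewrite cos_mulr2n sin_mulr2n.
have e := cos2Dsin2 h.
rewrite subr0.
nra.
Qed.

Lemma Qsin B : (1 <= B)%N -> 2 <= (2 ^ B)%:R * sin (pi / (2 ^ B)%:R) :> R.
Proof.
elim: B => // B IH _.
have [->|B1] := eqVneq B 0%N.
  by rewrite expn1 -[pi / 2]/(pi / 2%:R) sin_pihalf mulr1.
have {IH} IH := IH (neq0_lt0n (negbTE B1)).
set x := pi / (2 ^ B.+1)%:R.
have hx : pi / (2 ^ B)%:R = x *+ 2.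
  by rewrite /x expnS natrM -mulr_natr; field; rewrite pnatr_eq0 expn_eq0.
rewrite hx sin_mulr2n in IH.
have x0 : 0 <= x by rewrite /x divr_ge0 ?pi_ge0.
have xpi : x <= pi.
  rewrite /x ler_pdivrMr ?ltr0n ?expn_gt0 // ler_peMr ?pi_ge0 //.
  by rewrite (natrX R 2) exprn_ege1 ?ler1n.
have s0 : 0 <= sin x by apply: sin_ge0_pi; rewrite x0 xpi.
have c1 := cos_le1 x.
rewrite expnS natrM.
have hh : 0 <= (2 ^ B)%:R * sin x * (1 - cos x) :> R.
  by rewrite !mulr_ge0 ?ler0n // subr_ge0.
rewrite -mulr_natr in IH.
nra.
Qed.

End Ana.

Section OneD.
Variable R : realType.

Lemma sum_modL (f : nat -> R[i]) L Q : (0 < L)%N ->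
  \sum_(v < L * Q) f (v %% L)%N = (\sum_(b < L) f b) *+ Q.
Proof.
move=> L0; elim: Q => [|Q IH]; first by rewrite muln0 big_ord0 mulr0n.
rewrite mulnS addnC big_split_ord /= IH mulrSr; congr (_ + _).
apply: eq_bigr => b _ /=; by rewrite (mulnC L Q) modnMDl modn_small.
Qed.

Lemma sqnormM (x y : R[i]) : sqnorm (x * y) = sqnorm x * sqnorm y.
Proof. by case: x => a b; case: y => c d; rewrite /sqnorm /=; ring. Qed.

Lemma sqnormJ (x : R[i]) : sqnorm (x^*) = sqnorm x.
Proof. by case: x => a b; rewrite /sqnorm /= sqrrN. Qed.

Lemma sqnormMn (x : R[i]) N : sqnorm (x *+ N) = sqnorm x * (N%:R ^+ 2).
Proof.
rewrite -[x *+ N]mulr_natr sqnormM; congr (_ * _).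
have -> : (N%:R : R[i]) = (N%:R)%:C by rewrite rmorph_nat.
by rewrite /sqnorm /= expr0n addr0.
Qed.

Lemma sqnorm_ge0 (x : R[i]) : 0 <= sqnorm x.
Proof. by rewrite /sqnorm addr_ge0 ?sqr_ge0. Qed.

Variables k B : nat.
Hypothesis hB1 : (1 <= B)%N.
Hypothesis hBk : (B <= k)%N.

Let q := (2 ^ k)%N.
Let Q := (2 ^ B)%N.
Let L := (2 ^ (k - B))%N.

Lemma qLQ : q = (L * Q)%N.
Proof. by rewrite /q /L /Q -expnD subnK. Qed.

Lemma q_gt1 : (1 < q)%N.
Proof. by rewrite /q -{1}(expn0 2) ltn_exp2l // (leq_trans hB1 hBk). Qed.

Lemma Q_gt1 : (1 < Q)%N.
Proof. by rewrite /Q -{1}(expn0 2) ltn_exp2l. Qed.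

Lemma L_gt0 : (0 < L)%N.
Proof. by rewrite /L expn_gt0. Qed.

Lemma msb_val (v : 'Z_(2 ^ k)) : val (msb B v) = (val v %/ L)%N.
Proof.
rewrite /msb /= -/L; have -> : (Zp_trunc (2 ^ B)).+2 = Q by exact: Zp_cast Q_gt1.
apply: modn_small; rewrite ltn_divLR ?L_gt0 // mulnC -qLQ.
exact: (valZp_lt q_gt1).
Qed.

Lemma phase (y : 'Z_(2 ^ k)) :
  @chiZ R (2 ^ k) y * @chiZ R (2 ^ B) (msb B (- y)) = (chin R q (val (- y) %% L))^*.
Proof.
set v := val (- y).
have -> : @chiZ R (2 ^ k) y = (chin R q v)^*.
  by rewrite -[in LHS](opprK y) (chiZN R q_gt1).
rewrite /chiZ msb_val -/v -/Q.
have e1 : chin R Q (v %/ L) = chin R q (L * (v %/ L)) by rewrite qLQ chin_scale // L_gt0.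
have e2 : chin R q v = chin R q (L * (v %/ L)) * chin R q (v %% L).
  by rewrite -chinD mulnC -divn_eq.
have e3 : chin R Q (v %/ L) = chin R q v * (chin R q (v %% L))^*.
  by rewrite e1 e2 -mulrA [_ * _^*]mulrC chinJ mulr1.
by rewrite e3 mulrA chinJ mul1r.
Qed.

Definition Ysum := \sum_(y : 'Z_(2 ^ k)) @chiZ R (2 ^ k) y * @chiZ R (2 ^ B) (msb B (- y)).

Lemma Ysum_eq : Ysum = (\sum_(b < L) (chin R q b)^*) *+ Q.
Proof.
rewrite /Ysum; under eq_bigr => y _ do rewrite phase.
rewrite (reindex_inj oppr_inj).
under eq_bigr => y _ do rewrite opprK.
transitivity (\sum_(0 <= v < (Zp_trunc (2 ^ k)).+2) (chin R q (v %% L)%N)^*).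
  by rewrite big_mkord.
have -> : (Zp_trunc (2 ^ k)).+2 = q by exact: Zp_cast q_gt1.
rewrite big_mkord.
have := sum_modL (fun b => (chin R q b)^*) Q L_gt0; rewrite -qLQ => <- //.
Qed.

End OneD.

Section Bound.
Variable R : realType.
Variables k B : nat.
Hypothesis hB1 : (1 <= B)%N.
Hypothesis hBk : (B <= k)%N.

Lemma Ysum_bound : 4 / pi ^+ 2 * ((2 ^ k)%N%:R) ^+ 2 <= sqnorm (Ysum R k B).
Proof.
set q := (2 ^ k)%N; set Q := (2 ^ B)%N; set L := (2 ^ (k - B))%N.
have hq : q = (L * Q)%N by exact: qLQ.
rewrite Ysum_eq // -rmorph_sum /= sqnormMn sqnormJ.
set Sg := \sum_(b < _) _.
set X := sqnorm Sg.
have X0 : 0 <= X by exact: sqnorm_ge0.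
have eS : chin R q L - 1 = (chin R q 1 - 1) * Sg.
  rewrite (@chinX R q L) subrX1 /Sg; congr (_ * _); apply: eq_bigr => b _; exact/esym/chinX.
have qr0 : (0 : R) < q%:R by rewrite ltr0n expn_gt0.
have Qr0 : (0 : R) < Q%:R by rewrite ltr0n expn_gt0.
have Lr0 : (0 : R) < L%:R by rewrite ltr0n expn_gt0.
have e1 : sqnorm (chin R q L - 1) = 4 * sin (pi / Q%:R) ^+ 2.
  rewrite /chin sqnorm_ex_sub1; congr (_ * (sin _) ^+ 2).
  rewrite hq natrM; field; rewrite !gt_eqF //.
have e2 : sqnorm (chin R q 1 - 1) = 4 * sin (pi / q%:R) ^+ 2.
  rewrite /chin sqnorm_ex_sub1; congr (_ * (sin _) ^+ 2).
  field; rewrite !gt_eqF //.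
have e : sin (pi / Q%:R) ^+ 2 = sin (pi / q%:R) ^+ 2 * X :> R.
  have := congr1 (@sqnorm R) eS; rewrite sqnormM e1 e2 -/X => h; lra.
have pi0 : (0 : R) < pi := pi_gt0 R.
have s1ge0 : 0 <= sin (pi / q%:R) :> R.
  apply: sin_ge0_pi; apply/andP; split; first by rewrite divr_ge0 ?ltW.
  rewrite ler_pdivrMr // ler_peMr ?ltW // ltr1n; exact: (q_gt1 hB1 hBk).
have s1le : sin (pi / q%:R) * q%:R <= pi :> R.
  by rewrite -ler_pdivlMr // sin_lex // divr_ge0 ?ltW.
have h2 : 2 <= Q%:R * sin (pi / Q%:R) :> R by exact: Qsin.
have step1 : 4 <= (Q%:R * sin (pi / Q%:R)) ^+ 2 :> R by nra.
have step2 : (Q%:R * sin (pi / Q%:R)) ^+ 2 * q%:R ^+ 2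
             = Q%:R ^+ 2 * X * (sin (pi / q%:R) * q%:R) ^+ 2 :> R.
  by rewrite exprMn e; ring.
have step3 : (sin (pi / q%:R) * q%:R) ^+ 2 <= pi ^+ 2 :> R.
  have sq0 : 0 <= sin (pi / q%:R) * q%:R :> R by apply: mulr_ge0 => //; apply: ltW.
  nra.
have QX0 : 0 <= Q%:R ^+ 2 * X by rewrite mulr_ge0 ?sqr_ge0.
have step4 : 4 * q%:R ^+ 2 <= Q%:R ^+ 2 * X * pi ^+ 2 :> R.
  have := ler_wpM2l QX0 step3; rewrite -step2 => h.
  have := ler_wpM2r (sqr_ge0 (q%:R : R)) step1; lra.
rewrite mulrAC ler_pdivrMr ?exprn_gt0 //.
by rewrite [X * _]mulrC.
Qed.

End Bound.

Section Four.
Variable R : realType.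
Variable p : nat.
Hypothesis hp : (1 < p)%N.

Lemma card_Zp' : #|{: 'Z_p}| = p.
Proof. by rewrite card_ord Zp_cast. Qed.

Definition cM m n : R := (Num.sqrt (#|{: 'M['Z_p]_(m, n)}|%:R))^-1.

Lemma cM2 m n : cM m n ^+ 2 = (#|{: 'M['Z_p]_(m, n)}|%:R)^-1.
Proof. by rewrite /cM exprVn sqr_sqrtr // ler0n. Qed.

Lemma conj_realM (r : R) (x : R[i]) : (r%:C * x)^* = r%:C * x^*.
Proof. by case: x => a b; simpc. Qed.

Definition FU m n (D C : 'M['Z_p]_(m, n)) : R[i] := (cM m n)%:C * chiZ R (dotm D C).

Lemma FU_unitary m n : unitary (@FU m n).
Proof.
move=> C C'.
transitivity ((cM m n ^+ 2)%:C * \sum_D chiZ R (dotm D (C' - C))).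
  rewrite mulr_sumr; apply: eq_bigr => D _.
  rewrite /FU conj_realM (dotmBr) (chiZB R hp).
  by rewrite rmorphXn /=; ring.
rewrite (chi_ortho R hp) subr_eq0 [C' == C]eq_sym.
case: (C == C'); last by rewrite mulr0.
rewrite cM2 -(rmorph_nat (real_complex R)) -rmorphM /= mulVf // pnatr_eq0 -lt0n.
by apply/card_gt0P; exists 0.
Qed.

Lemma sqnorm_realM (r : R) (x : R[i]) : sqnorm (r%:C * x) = r ^+ 2 * sqnorm x.
Proof. by rewrite sqnormM /sqnorm /= expr0n addr0. Qed.

Lemma parseval n (f : 'rV['Z_p]_n -> R[i]) : (forall c, sqnorm (f c) = 1) ->
  \sum_d sqnorm (\sum_c chiZ R (dotm d c) * f c) = (#|{: 'rV['Z_p]_n}|%:R) ^+ 2.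
Proof.
move=> hf.
have := unitary_norm f (@FU_unitary 1 n).
rewrite /apply_op /FU.
under eq_bigr => d _ do under eq_bigr => c _ do rewrite -mulrA.
under eq_bigr => d _ do rewrite -mulr_sumr sqnorm_realM.
rewrite -mulr_sumr cM2.
under [in RHS]eq_bigr => c _ do rewrite hf.
rewrite sumr_const => h.
have c0 : (#|{: 'rV['Z_p]_n}|%:R : R) != 0.
  by rewrite pnatr_eq0 -lt0n; apply/card_gt0P; exists 0.
apply: (mulfI (invr_neq0 c0)); rewrite h -mulr_natr mul1r.
by rewrite expr2 mulrA mulVf // mul1r.
Qed.

Definition rdot n (c : 'rV['Z_p]_n) (s : 'cV['Z_p]_n) : 'Z_p := \sum_i c 0 i * s i 0.

Lemma rdot_shift n (c : 'rV['Z_p]_n) s i0 t :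
  rdot (c + t *: delta_mx 0 i0) s = rdot c s + t * s i0 0.
Proof.
rewrite /rdot (eq_bigr (fun i => c 0 i * s i 0 + t * (delta_mx 0 i0 : 'rV['Z_p]_n) 0 i * s i 0)); last first.
  by move=> i _; rewrite !mxE mulrDl.
rewrite big_split /=; congr (_ + _).
rewrite (bigD1 i0) //= mxE !eqxx mulr1 big1 ?addr0 // => i /negbTE hi.
by rewrite mxE hi mulr0 mul0r.
Qed.

Lemma uniform n (s : 'cV['Z_p]_n) (i0 : 'I_n) (phi : 'Z_p -> R[i]) :
  s i0 0 \is a GRing.unit ->
  p%:R * \sum_(c : 'rV['Z_p]_n) phi (rdot c s)
  = (#|{: 'rV['Z_p]_n}|%:R) * \sum_y phi y.
Proof.
move=> hu.
set X := \sum_c _.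
have hX t : X = \sum_(c : 'rV['Z_p]_n) phi (rdot c s + t * s i0 0).
  rewrite {1}/X (reindex_inj (addIr (t *: delta_mx 0 i0 : 'rV['Z_p]_n))) /=.
  by apply: eq_bigr => c _; rewrite rdot_shift.
transitivity (\sum_(t : 'Z_p) X).
  by rewrite sumr_const card_Zp' mulr_natl.
under eq_bigr => t _ do rewrite (hX t).
rewrite exchange_big /= mulr_natl -sumr_const; apply: eq_bigr => c _.
have hinj : injective (fun t : 'Z_p => rdot c s + t * s i0 0).
  by move=> a b /addrI /(mulIr hu).
by rewrite [RHS](reindex_inj hinj).
Qed.

End Four.

Section Tens.
Variable R : realType.

Lemma sum_pair (X Y : finType) (G : X * Y -> R[i]) :
  \sum_p G p = \sum_x \sum_y G (x, y).
Proof. by rewrite pair_bigA; apply: eq_bigr => -[x y]. Qed.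

Lemma sum_pairR (X Y : finType) (G : X * Y -> R) :
  \sum_p G p = \sum_x \sum_y G (x, y).
Proof. by rewrite pair_bigA; apply: eq_bigr => -[x y]. Qed.

Definition tens (X Y : finType) (U : X -> X -> R[i]) (a b : X * Y) : R[i] :=
  U a.1 b.1 * (a.2 == b.2)%:R.

Lemma conj_nat (b : bool) : (b%:R : R[i])^* = b%:R.
Proof. by case: b => /=; rewrite oppr0. Qed.

Lemma tens_unitary (X Y : finType) (U : X -> X -> R[i]) :
  unitary U -> unitary (@tens X Y U).
Proof.
move=> hU [y1 y2] [y1' y2'].
rewrite sum_pair /tens /=.
transitivity (\sum_x ((U x y1)^* * U x y1') * \sum_y ((y == y2)%:R * (y == y2')%:R : R[i])).
  apply: eq_bigr => x _; rewrite mulr_sumr; apply: eq_bigr => y _.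
  rewrite rmorphM /= conj_nat; ring.
rewrite -mulr_suml hU.
under eq_bigr => y _ do rewrite eq_sym.
rewrite sum_delta xpair_eqE.
by case: (y1 == y1'); case: (y2 == y2'); rewrite /= ?mulr1 ?mulr0 ?mul0r.
Qed.

Lemma tens_apply (X Y : finType) (U : X -> X -> R[i]) (phi : qstate R (X * Y)%type) x y :
  apply_op (@tens X Y U) phi (x, y) = apply_op U (fun x' => phi (x', y)) x.
Proof.
rewrite /apply_op sum_pair /tens /=; apply: eq_bigr => x' _.
under eq_bigr => y' _ do rewrite -mulrA.
by rewrite -mulr_sumr sum_delta.
Qed.

Lemma sum_delta' (T : finType) (x : T) (f : T -> R[i]) :
  \sum_y (y == x)%:R * f y = f x.
Proof. by under eq_bigr => y _ do rewrite eq_sym; rewrite sum_delta. Qed.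

Lemma sqnorm_prod (I : finType) (F : I -> R[i]) :
  sqnorm (\prod_i F i) = \prod_i sqnorm (F i).
Proof.
elim/big_rec2: _ => [|i a b _ <-]; last by rewrite sqnormM.
by rewrite /sqnorm /= expr1n expr0n addr0.
Qed.

Lemma sqnorm_chiZ p (x : 'Z_p) : sqnorm (chiZ R x) = 1.
Proof. exact: sqnorm_ex. Qed.

Lemma sqnorm_nat (b : bool) (x : R[i]) : sqnorm (b%:R * x) = b%:R * sqnorm x.
Proof. by case: b; rewrite ?mul1r ?mul0r // /sqnorm /= expr0n addr0. Qed.

End Tens.

Section Main.
Variable R : realType.
Variables k B n mbar nbar : nat.
Hypothesis hB1 : (1 <= B)%N.
Hypothesis hBk : (B <= k)%N.
Variable cols : 'I_mbar -> 'I_nbar.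

Local Notation K := 'Z_(2 ^ k).
Local Notation ZB := 'Z_(2 ^ B).
Local Notation T := (basis k B mbar n nbar unit).

Let hq : (1 < 2 ^ k)%N := q_gt1 hB1 hBk.
Let hQ : (1 < 2 ^ B)%N := Q_gt1 hB1.

Definition nM : R := #|{: 'M[K]_(mbar, n)}|%:R.
Definition nZ : R := #|{: 'M[ZB]_(mbar, nbar)}|%:R.
Definition c0 : R := (Num.sqrt (nM * nZ))^-1.

Definition psi0 : qstate R T := fun x =>
  let: (C1, C2, z, w) := x in
  (C2 == 0)%:R * (c0%:C * \prod_a (chiZ R (z a (cols a)))^*).

Definition V0 : T -> T -> R[i] := tens (tens (tens (@FU R (2 ^ k) mbar n))).

Definition out0 (x : T) (j : 'I_mbar) : 'cV[K]_n := let: (D, _, _, _) := x in (row j D)^T.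

Lemma nM_gt0 : 0 < nM.
Proof. by rewrite ltr0n; apply/card_gt0P; exists 0. Qed.
Lemma nZ_gt0 : 0 < nZ.
Proof. by rewrite ltr0n; apply/card_gt0P; exists 0. Qed.

Lemma sum_deltaR (X : finType) (x : X) (f : X -> R) : \sum_y (y == x)%:R * f y = f x.
Proof.
rewrite (bigD1 x) //= eqxx mul1r big1 ?addr0 // => y /negbTE ->.
by rewrite mul0r.
Qed.

Lemma psi_unit : unit_vector psi0.
Proof.
have hp (z : 'M[ZB]_(mbar, nbar)) : \prod_a sqnorm ((chiZ R (z a (cols a)))^*) = 1.
  by rewrite big1 // => a _; rewrite sqnormJ sqnorm_chiZ.
rewrite /unit_vector !sum_pairR /=.
under eq_bigr => C1 _ do under eq_bigr => C2 _ do under eq_bigr => z _ do under eq_bigr => w _ do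
  rewrite sqnorm_nat sqnorm_realM sqnorm_prod hp mulr1.
have hu (f : unit -> R) : \sum_w f w = f tt.
  by rewrite (bigD1 tt) //= big1 ?addr0 // => -[] /eqP.
under eq_bigr => C1 _ do under eq_bigr => C2 _ do under eq_bigr => z _ do rewrite hu.
under eq_bigr => C1 _ do under eq_bigr => C2 _ do rewrite sumr_const -mulrnAr.
under eq_bigr => C1 _ do rewrite sum_deltaR.
rewrite sumr_const -mulrnA -mulr_natr natrM -/nZ -/nM /c0 exprVn sqr_sqrtr; last by rewrite mulr_ge0 // ltW // ?nM_gt0 ?nZ_gt0.
rewrite [nZ * nM]mulrC mulVf //; apply: lt0r_neq0.
by rewrite mulr_gt0 ?nM_gt0 ?nZ_gt0.
Qed.

Lemma V_unitary : unitary V0.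
Proof. rewrite /V0; apply: tens_unitary; apply: tens_unitary; apply: tens_unitary. exact: FU_unitary. Qed.

Lemma V_apply (phi : qstate R T) D C2 z w :
  apply_op V0 phi (D, C2, z, w) = apply_op (@FU R (2 ^ k) mbar n) (fun C => phi (C, C2, z, w)) D.
Proof. by rewrite /V0 !tens_apply. Qed.


Definition gph (S : 'M[K]_(n, nbar)) (a : 'I_mbar) (c : 'rV[K]_n) : R[i] :=
  chiZ R (msb B (- rdot c (col (cols a) S))).
Definition Gf S a (d : 'rV[K]_n) : R[i] := \sum_c chiZ R (dotm d c) * gph S a c.

Lemma mxBE' (p q : nat) (A A' : 'M[ZB]_(p, q)) i j : (A - A') i j = A i j - A' i j.
Proof. by rewrite !mxE. Qed.

Lemma dec_entry S (C : 'M[K]_(mbar, n)) a :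
  frodo_dec B S C 0 a (cols a) = msb B (- rdot (row a C) (col (cols a) S)).
Proof.
rewrite /frodo_dec /rdot !mxE sub0r; congr (msb B (- _)).
by apply: eq_bigr => i _; rewrite !mxE.
Qed.

Lemma dotm_rows (D C : 'M[K]_(mbar, n)) :
  chiZ R (dotm D C) = \prod_a chiZ R (dotm (row a D) (row a C)).
Proof.
rewrite /dotm (chiZ_sum R hq); apply: eq_bigr => a _; rewrite big_ord1.
by congr (chiZ R _); apply: eq_bigr => i _; rewrite !mxE.
Qed.

Lemma Phi_eq S D C2 z w :
  apply_op V0 (dec_oracle S psi0) (D, C2, z, w) =
  (C2 == 0)%:R * (((@cM R (2 ^ k) mbar n)%:C * c0%:C) *
     ((\prod_a (chiZ R (z a (cols a)))^*) * \prod_a Gf S a (row a D))).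
Proof.
rewrite V_apply /apply_op /FU /dec_oracle /psi0 /=.
have [->|hC2] := eqVneq C2 0; last first.
  by rewrite mulr0n mul0r big1 // => C _; rewrite mul0r mulr0.
rewrite mulr1n mul1r.
have hz C a : (chiZ R ((z - frodo_dec B S C 0) a (cols a)))^* =
    gph S a (row a C) * (chiZ R (z a (cols a)))^*.
  rewrite -(chiZN R hQ) mxBE' opprB (chiZB R hQ) dec_entry //.
transitivity (\sum_C (((@cM R (2 ^ k) mbar n)%:C * c0%:C) *
    \prod_a (chiZ R (z a (cols a)))^*) *
    \prod_a (chiZ R (dotm (row a D) (row a C)) * gph S a (row a C))).
  apply: eq_bigr => C _; rewrite ?mul1r dotm_rows.
  rewrite [X in c0%:C * X](eq_bigr (fun a => gph S a (row a C) * (chiZ R (z a (cols a)))^*)); last by move=> a _; exact: hz.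
  rewrite !big_split /=; ring.
rewrite -mulr_sumr (sum_rows_all (fun a c => chiZ R (dotm (row a D) c) * gph S a c)).
by rewrite mulrA.
Qed.

Lemma sqnorm_real (r : R) : sqnorm (r%:C) = r ^+ 2.
Proof. by rewrite /sqnorm /= expr0n addr0. Qed.

Lemma sqnorm_Phi S D C2 z w :
  sqnorm (apply_op V0 (dec_oracle S psi0) (D, C2, z, w)) =
  (C2 == 0)%:R * ((@cM R (2 ^ k) mbar n * c0) ^+ 2 * \prod_a sqnorm (Gf S a (row a D))).
Proof.
rewrite Phi_eq sqnorm_nat !sqnormM !sqnorm_prod !sqnorm_real.
rewrite [\prod_a sqnorm (_^*)]big1 ?mul1r ?exprMn // => a _.
by rewrite sqnormJ sqnorm_chiZ.
Qed.

Lemma trmx_eq (A : 'rV[K]_n) (s : 'cV[K]_n) : (A^T == s) = (A == s^T).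
Proof. by apply/eqP/eqP => [<-|->]; rewrite trmxK. Qed.

Lemma meas_eq S j :
  meas_prob (apply_op V0 (dec_oracle S psi0)) (fun x => out0 x j == col (cols j) S) =
  nZ * (@cM R (2 ^ k) mbar n * c0) ^+ 2 *
    \sum_(D : 'M[K]_(mbar, n) | row j D == (col (cols j) S)^T)
       \prod_a sqnorm (Gf S a (row a D)).
Proof.
have hu (f : unit -> R) : \sum_w f w = f tt.
  by rewrite (bigD1 tt) //= big1 ?addr0 // => -[] /eqP.
rewrite /meas_prob big_mkcond !sum_pairR /=.
rewrite [X in _ = _ * X]big_mkcond mulr_sumr; apply: eq_bigr => D _.
rewrite trmx_eq.
case: (row j D == _); last first.
  by rewrite mulr0 big1 // => C2 _; rewrite big1 // => z _; rewrite hu.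
under eq_bigr => C2 _ do under eq_bigr => z _ do rewrite hu sqnorm_Phi.
under eq_bigr => C2 _ do rewrite sumr_const -mulrnAr.
by rewrite sum_deltaR -mulr_natl mulrA.
Qed.

Definition nr : R := #|{: 'rV[K]_n}|%:R.

Lemma nr_gt0 : 0 < nr.
Proof. by rewrite ltr0n; apply/card_gt0P; exists 0. Qed.

Lemma nM_nr : nM = nr ^+ mbar.
Proof. by rewrite /nM /nr !card_mx mul1n mulnC expnM natrX. Qed.

Lemma prob_eq S j :
  meas_prob (apply_op V0 (dec_oracle S psi0)) (fun x => out0 x j == col (cols j) S) =
  sqnorm (Gf S j (col (cols j) S)^T) / nr ^+ 2.
Proof.
rewrite meas_eq.
set s := (col (cols j) S)^T.
rewrite (eq_bigl (fun D : 'M[K]_(mbar, n) => [forall a, (a != j) || (row a D == s)])); last first.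
  move=> D; apply/idP/forallP => [h a | h]; first by case: (eqVneq a j) => [->|].
  by move: (h j); rewrite eqxx.
rewrite (sum_rows (fun a d => (a != j) || (d == s)) (fun a d => sqnorm (Gf S a d))).
rewrite (bigD1 j) //= eqxx /= big_pred1_eq.
rewrite (eq_bigr (fun _ => nr ^+ 2)); last first.
  move=> a haj; rewrite haj /=.
  rewrite (parseval hq) //.
  by move=> c; rewrite /gph sqnorm_chiZ.
rewrite prodr_const cardC1 card_ord.
rewrite exprMn cM2 -/nM /c0 exprVn sqr_sqrtr; last by rewrite mulr_ge0 // ltW // ?nM_gt0 ?nZ_gt0.
rewrite nM_nr.
have hm : (0 < mbar)%N by apply: leq_ltn_trans (ltn_ord j).
rewrite -(prednK hm).
set X := nr ^+ mbar.-1.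
have nr0 : nr != 0 by rewrite gt_eqF ?nr_gt0.
have nZ0 : nZ != 0 by rewrite gt_eqF ?nZ_gt0.
rewrite exprSr -/X -exprAC -/X.
have X0 : X != 0 by rewrite expf_neq0.
field.
by rewrite nr0 X0 nZ0.
Qed.

Lemma Gf_bound (S : 'M[K]_(n, nbar)) j : (exists i, odd (val (S i (cols j)))) ->
  4 / pi ^+ 2 * nr ^+ 2 <= sqnorm (Gf S j (col (cols j) S)^T).
Proof.
case=> i0 hodd.
set s := col (cols j) S.
have hG : Gf S j s^T = \sum_c (fun y => chiZ R y * chiZ R (msb B (- y))) (rdot c s).
  apply: eq_bigr => c _; rewrite /gph /=; congr (chiZ R _ * _).
  by rewrite /dotm /rdot big_ord1; apply: eq_bigr => i _; rewrite !mxE mulrC.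
have hu : s i0 0 \is a GRing.unit.
  rewrite /s mxE -[S i0 (cols j)]natr_Zp unitZpE //.
  by rewrite coprimeXl // coprime2n.
have e := uniform hq (fun y => chiZ R y * chiZ R (msb B (- y))) hu.
rewrite -hG -/(Ysum R k B) in e.
have := congr1 (@sqnorm R) e.
rewrite !mulr_natl !sqnormMn -/nr => e2.
have hb := Ysum_bound R hB1 hBk.
have q0 : (0 : R) < (2 ^ k)%N%:R ^+ 2 by rewrite exprn_gt0 // ltr0n expn_gt0.
rewrite -(ler_pM2r q0) e2.
have nr2 : 0 <= nr ^+ 2 by rewrite sqr_ge0.
have := ler_wpM2r nr2 hb.
move=> h; lra.
Qed.

End Main.




End AllHelpers.
End Helpers.
Import Helpers.
Import Pilot.Defs.

Theorem theorem10 (R : realType) (k B n mbar nbar : nat) :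
  (1 <= B)%N -> (B <= k)%N ->
  forall cols : 'I_mbar -> 'I_nbar, injective cols ->
  exists (W : finType) (psi : qstate R (basis k B mbar n nbar W))
         (V : basis k B mbar n nbar W -> basis k B mbar n nbar W -> R[i])
         (out : basis k B mbar n nbar W -> 'I_mbar -> 'cV['Z_(2^k)]_n),
    unit_vector psi /\ unitary V /\
    forall (S : 'M['Z_(2^k)]_(n, nbar)) (j : 'I_mbar),
      (exists i : 'I_n, odd (val (S i (cols j)))) ->
      4 / pi ^+ 2 <=
        meas_prob (apply_op V (dec_oracle S psi))
                  (fun x => out x j == col (cols j) S).
Proof.
move=> hB1 hBk cols _.
exists unit, (@psi0 R k B n mbar nbar cols), (@V0 R k B n mbar nbar), (@out0 k B n mbar nbar).
split; first exact: psi_unit.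
split; first exact: (V_unitary R hB1 hBk).
move=> S j hodd.
rewrite (prob_eq R hB1 hBk).
have hb := Gf_bound R hB1 hBk hodd.
have nr0 : 0 < nr R k n by exact: nr_gt0.
rewrite ler_pdivlMr ?exprn_gt0 //.
Qed.
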